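(* Let $G$ be a connected graph with $|V(G)|=(\Delta(G)+1)(\gamma(G)-1)+1\geq 4$. If $G$ is a vertex domination-critical graph, then $G$ is regular, and $G$ is both a hypo-efficient domination graph and a hypo-unique domination graph.
   Context: All graphs are finite, simple and undirected. For $v\in V(G)$, $N[v]$ is the closed neighborhood of $v$. A set $D\subseteq V(G)$ is dominating if every vertex of $G$ not in $D$ has a neighbor in $D$; $\gamma(G)$ is the minimum size of a dominating set, and a dominating set of size $\gamma(G)$ is a $\gamma$-set. A vertex $v$ is $\gamma$-critical if $\gamma(G-v)<\gamma(G)$; $G$ is a vertex domination-critical graph if every vertex is $\gamma$-critical. A set $D\subseteq V(H)$ is an efficient dominating set (EDS) of $H$ if $|N_H[v]\cap D|=1$ for every $v\in V(H)$. $G$ is a hypo-efficient domination graph if $G$ has no EDS but $G-v$ has at least one EDS for every $v\in V(G)$. $G$ is a hypo-unique domination graph if $G$ has at least two $\gamma$-sets but $G-v$ has exactly one $\gamma$-set for every $v\in V(G)$. $\Delta(G)$ is the maximum degree. *)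

(* Defs.v *)
(* Induced subgraphs are given by
   a vertex set S : {set T}; G - v is the induced subgraph on [set: T] :\ v. *)
From mathcomp Require Import all_boot all_order.
Set Implicit Arguments. Unset Strict Implicit. Unset Printing Implicit Defensive.

Section Graphs.
Variables (T : finType) (e : rel T).

Definition simple_graph : Prop := symmetric e /\ irreflexive e.

Definition connected_graph : Prop := forall u v : T, connect e u v.

Definition deg (v : T) : nat := #|[set u | e v u]|.
Definition Delta : nat := \max_(v : T) deg v.
Definition regular : Prop := forall u v : T, deg u = deg v.

Definition cnbhd (S : {set T}) (v : T) : {set T} :=
  [set u in S | (u == v) || e v u].

Definition dominating (S D : {set T}) : bool :=
  (D \subset S) && [forall v in S, (v \in D) || [exists u in D, e u v]].

Definition gamma (S : {set T}) : nat :=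
  \big[minn/#|S|]_(D : {set T} | dominating S D) #|D|.

Definition gamma_set (S D : {set T}) : bool :=
  dominating S D && (#|D| == gamma S).

Definition Gminus (v : T) : {set T} := [set: T] :\ v.

Definition vertex_domination_critical : Prop :=
  forall v : T, gamma (Gminus v) < gamma [set: T].

Definition efficient_dominating (S D : {set T}) : bool :=
  (D \subset S) && [forall v in S, #|cnbhd S v :&: D| == 1].

Definition has_EDS (S : {set T}) : Prop :=
  exists D : {set T}, efficient_dominating S D.

Definition hypo_efficient : Prop :=
  ~ has_EDS [set: T] /\ forall v : T, has_EDS (Gminus v).

Definition hypo_unique : Prop :=
  1 < #|[set D : {set T} | gamma_set [set: T] D]| /\
  forall v : T, #|[set D : {set T} | gamma_set (Gminus v) D]| = 1.

End Graphs.

(* Main.v *)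
Require Import Defs.
From mathcomp Require Import all_boot all_order zify.
Set Implicit Arguments. Unset Strict Implicit. Unset Printing Implicit Defensive.

Lemma bigmin_le_seq (I : eqType) (r : seq I) (P : pred I) (F : I -> nat) x j :
  j \in r -> P j -> \big[minn/x]_(i <- r | P i) F i <= F j.
Proof.
elim: r => //= a r IH; rewrite in_cons big_cons => /orP [/eqP <- Pj | jr Pj].
- by rewrite Pj geq_minl.
- case: (P a); last exact: IH.
  by rewrite geq_min (IH jr Pj) orbT.
Qed.

Lemma gamma_le (T : finType) (e : rel T) S D : dominating e S D -> gamma e S <= #|D|.
Proof. by move=> H; rewrite /gamma; apply: bigmin_le_seq => //; rewrite mem_index_enum. Qed.

Lemma gamma_ex (T : finType) (e : rel T) S : exists D, dominating e S D /\ #|D| = gamma e S.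
Proof.
rewrite /gamma; apply: (big_ind (fun x => exists D, dominating e S D /\ #|D| = x)).
- exists S; split=> //; rewrite /dominating subxx /=; apply/forall_inP=> v ->. done.
- move=> x y [D1 [H1 <-]] [D2 [H2 <-]]; case: (leqP #|D1| #|D2|) => h.
  + by exists D1.
  + by exists D2.
- by move=> D HD; exists D.
Qed.

Lemma card_inter (T : finType) (A B : {set T}) : #|A :&: B| = \sum_(x in B) (x \in A).
Proof.
rewrite -sum1_card big_mkcond [RHS]big_mkcond /=; apply: eq_bigr => x _.
by rewrite inE; case: (x \in A); case: (x \in B).
Qed.

Lemma cnbhd_sub (T : finType) (e : rel T) S v : cnbhd e S v \subset S.
Proof. by apply/subsetP=> u; rewrite inE => /andP []. Qed.

Lemma dcount (T : finType) (e : rel T) (esym : symmetric e) (S D : {set T}) :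
  D \subset S -> \sum_(w in S) #|cnbhd e S w :&: D| = \sum_(d in D) #|cnbhd e S d|.
Proof.
move=> DS; under eq_bigr do rewrite card_inter.
rewrite exchange_big /=; apply: eq_bigr => d dD.
rewrite -(setIidPl (cnbhd_sub e S d)) card_inter; apply: eq_bigr => w wS.
by rewrite !inE (subsetP DS _ dD) wS eq_sym esym.
Qed.

Lemma sum_eq_low (I : finType) (A : {set I}) (f : I -> nat) a :
  (forall i, i \in A -> a <= f i) -> \sum_(i in A) f i <= #|A| * a ->
  forall i, i \in A -> f i = a.
Proof.
move=> H Hs i iA; apply/eqP; rewrite eqn_leq H // andbT.
move: Hs; rewrite (big_setD1 i) //= (cardsD1 i A) iA.
have : \sum_(j in A :\ i) a <= \sum_(j in A :\ i) f j.
  by apply: leq_sum => j; rewrite inE => /andP [_ /H].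
rewrite sum_nat_const; lia.
Qed.

Lemma sum_eq_up (I : finType) (A : {set I}) (f : I -> nat) a :
  (forall i, i \in A -> f i <= a) -> #|A| * a <= \sum_(i in A) f i ->
  forall i, i \in A -> f i = a.
Proof.
move=> H Hs i iA; apply/eqP; rewrite eqn_leq H //=.
move: Hs; rewrite (big_setD1 i) //= (cardsD1 i A) iA.
have : \sum_(j in A :\ i) f j <= \sum_(j in A :\ i) a.
  by apply: leq_sum => j; rewrite inE => /andP [_ /H].
rewrite sum_nat_const; lia.
Qed.

Lemma cnbhdT_card (T : finType) (e : rel T) (eirr : irreflexive e) d :
  #|cnbhd e [set: T] d| = (deg e d).+1.
Proof.
have -> : cnbhd e [set: T] d = d |: [set u | e d u].
  by apply/setP=> u; rewrite !inE.
by rewrite cardsU1 inE eirr.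
Qed.

Lemma deg_le (T : finType) (e : rel T) d : deg e d <= Delta e.
Proof. by rewrite /Delta; apply: (leq_bigmax_cond d). Qed.

Lemma cnbhd_mono (T : finType) (e : rel T) S d : cnbhd e S d \subset cnbhd e [set: T] d.
Proof. by apply/subsetP=> u; rewrite !inE => /andP [_ ->]. Qed.

Lemma dom_cnbhd (T : finType) (e : rel T) (esym : symmetric e) S D v :
  dominating e S D -> v \in S -> 0 < #|cnbhd e S v :&: D|.
Proof.
case/andP=> DS /forall_inP H vS; rewrite card_gt0; case/orP: (H v vS) => [vD | /existsP [u /andP [uD euv]]].
- by apply/set0Pn; exists v; rewrite !inE vS eqxx vD.
- apply/set0Pn; exists u; rewrite !inE (subsetP DS _ uD) uD esym euv orbT //.
Qed.

Lemma card_Gminus (T : finType) (z : T) : #|Gminus z| = #|T| - 1.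
Proof. by rewrite /Gminus; have := cardsD1 z [set: T]; rewrite inE cardsT; lia. Qed.

Lemma code_props (T : finType) (e : rel T) (esym : symmetric e) (eirr : irreflexive e) k z D :
  #|T| = (Delta e + 1) * k + 1 -> dominating e (Gminus z) D -> #|D| = k ->
  [/\ D \subset Gminus z, (forall d, d \in D -> ~~ e d z),
      (forall d, d \in D -> deg e d = Delta e) &
      (forall w, w \in Gminus z -> #|cnbhd e (Gminus z) w :&: D| = 1)].
Proof.
move=> Hn Hdom HD; have DS : D \subset Gminus z by case/andP: Hdom.
set S := Gminus z.
have cS : #|S| = (Delta e + 1) * k by rewrite card_Gminus Hn; lia.
have Hs := dcount esym DS.
have lo : #|S| * 1 <= \sum_(w in S) #|cnbhd e S w :&: D|.
  by rewrite -sum_nat_const; apply: leq_sum => w wS; apply: dom_cnbhd.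
have gup : forall d, d \in D -> #|cnbhd e S d| <= Delta e + 1.
  move=> d _; apply: (leq_trans (subset_leq_card (cnbhd_mono e S d))).
  rewrite (cnbhdT_card eirr); have Hx := deg_le e d; lia.
have up : \sum_(d in D) #|cnbhd e S d| <= #|D| * (Delta e + 1).
  by rewrite -sum_nat_const; apply: leq_sum => d dD; exact: gup.
have eqg := sum_eq_up gup.
have eqf := @sum_eq_low _ S (fun w => #|cnbhd e S w :&: D|) 1 (fun w wS => dom_cnbhd esym Hdom wS).
have G : forall d, d \in D -> #|cnbhd e S d| = Delta e + 1.
  apply: eqg; rewrite -Hs; apply: leq_trans lo; rewrite HD cS; lia.
split=> //.
- move=> d dD; apply/negP => edz.
  have zin : z \in cnbhd e [set: T] d by rewrite !inE edz orbT.
  have : cnbhd e S d \subset cnbhd e [set: T] d :\ z.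
    by apply/subsetP=> u; rewrite !inE => /andP [/andP [-> _] ->].
  move/subset_leq_card; rewrite (G d dD).
  have := cardsD1 z (cnbhd e [set: T] d); rewrite zin (cnbhdT_card eirr).
  have := deg_le e d; lia.
- move=> d dD; apply/eqP; rewrite eqn_leq deg_le /=.
  have := subset_leq_card (cnbhd_mono e S d); rewrite (G d dD) (cnbhdT_card eirr); lia.
- apply: eqf; rewrite Hs; apply: leq_trans up _; rewrite HD cS; lia.
Qed.

Lemma card1_eq (T : finType) (A : {set T}) x y : #|A| = 1 -> x \in A -> y \in A -> x = y.
Proof. by move/eqP/cards1P=> [c ->]; rewrite !inE => /eqP -> /eqP ->. Qed.

Lemma sum_neq (T : finType) (A : {set T}) z : \sum_(a in A) (a != z) + (z \in A) = #|A|.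
Proof.
rewrite (cardsD1 z A) addnC; congr (_ + _).
have -> : A :\ z = [set~ z] :&: A by rewrite setDE setIC.
by rewrite card_inter; apply: eq_bigr => a _; rewrite in_setC1.
Qed.

Lemma perfect_nadj (T : finType) (e : rel T) (eirr : irreflexive e) z (P : {set T}) :
  P \subset Gminus z ->
  (forall w, w \in Gminus z -> #|cnbhd e (Gminus z) w :&: P| = 1) ->
  forall a b, a \in P -> b \in P -> e a b -> False.
Proof.
move=> PS H a b aP bP eab.
have aS := subsetP PS _ aP; have bS := subsetP PS _ bP.
have ab : a = b.
  apply: (card1_eq (H a aS)).
  - by rewrite inE aP andbT inE aS eqxx.
  - by rewrite inE bP andbT inE bS eab orbT.
by move: eab; rewrite ab eirr.
Qed.

Lemma code_sym (T : finType) (e : rel T) (esym : symmetric e) (eirr : irreflexive e) k z1 z2 P Q :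
  #|T| = (Delta e + 1) * k + 1 ->
  dominating e (Gminus z1) P -> #|P| = k ->
  dominating e (Gminus z2) Q -> #|Q| = k -> z1 != z2 ->
  (z2 \in P) = (z1 \in Q).
Proof.
move=> Hn dP cP dQ cQ z12.
have [PS Pn _ Pc] := code_props esym eirr Hn dP cP.
have [QS Qn _ Qc] := code_props esym eirr Hn dQ cQ.
have nP := perfect_nadj eirr PS Pc; have nQ := perfect_nadj eirr QS Qc.
have CL : forall (z1 z2 : T) (P Q : {set T}),
  P \subset Gminus z1 -> Q \subset Gminus z2 ->
  (forall d, d \in Q -> ~~ e d z2) ->
  (forall w, w \in Gminus z2 -> #|cnbhd e (Gminus z2) w :&: Q| = 1) ->
  (forall a b, a \in P -> b \in P -> e a b -> False) ->
  forall a, a \in P :\: Q -> \sum_(b in Q :\: P) e a b = (a != z2).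
  move=> y1 y2 P1 Q1 P1S Q1S Q1n Q1c P1n a; rewrite inE => /andP [aQ aP].
  case: (eqVneq a y2) => [-> | az] /=.
  - apply: big1 => b; rewrite inE => /andP [_ bQ]; rewrite esym.
    by move: (Q1n b bQ) => /negbTE ->.
  - have aS : a \in Gminus y2 by rewrite !inE az.
    rewrite -(Q1c a aS) card_inter big_mkcond [RHS]big_mkcond /=.
    apply: eq_bigr => b _; rewrite inE.
    case bQ: (b \in Q1); case bP: (b \in P1) => //=.
    + have := subsetP Q1S _ bQ; rewrite !inE => /andP [-> _] /=.
      have ba : (b == a) = false by apply/negP => /eqP ba; move: aQ; rewrite -ba bQ.
      rewrite ba /=; case eab: (e a b) => //.
      by case: (P1n a b aP bP eab).
    + have := subsetP Q1S _ bQ; rewrite !inE => /andP [-> _] /=.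
      have ba : (b == a) = false by apply/negP => /eqP ba; move: aQ; rewrite -ba bQ.
      by rewrite ba.
have E1 := CL z1 z2 P Q PS QS Qn Qc nP.
have E2 := CL z2 z1 Q P QS PS Pn Pc nQ.
have X : \sum_(a in P :\: Q) \sum_(b in Q :\: P) e a b = \sum_(b in Q :\: P) \sum_(a in P :\: Q) e b a.
  by rewrite exchange_big /=; apply: eq_bigr => b _; apply: eq_bigr => a _; rewrite esym.
rewrite (eq_bigr _ E1) (eq_bigr _ E2) in X.
have S1 := sum_neq (P :\: Q) z2; have S2 := sum_neq (Q :\: P) z1.
have z2Q : z2 \notin Q by apply/negP => /(subsetP QS); rewrite !inE eqxx.
have z1P : z1 \notin P by apply/negP => /(subsetP PS); rewrite !inE eqxx.
move: S1 S2; rewrite !inE (negbTE z2Q) (negbTE z1P) /=.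
have Cd : #|P :\: Q| = #|Q :\: P| by rewrite !cardsD setIC cP cQ.
rewrite Cd X; case: (z2 \in P); case: (z1 \in Q) => //=; lia.
Qed.

Lemma dom_add (T : finType) (e : rel T) (esym : symmetric e) z x D :
  (x = z \/ e x z) -> dominating e (Gminus z) D -> dominating e [set: T] (x |: D).
Proof.
move=> hx /andP [DS /forall_inP H]; apply/andP; split; first exact: subsetT.
apply/forall_inP => w _; case: (eqVneq w z) => [-> | wz].
- case: hx => [-> | exz]; first by rewrite setU11.
  by apply/orP; right; apply/existsP; exists x; rewrite setU11 exz.
- have wS : w \in Gminus z by rewrite !inE wz.
  case/orP: (H w wS) => [wD | /existsP [u /andP [uD euw]]].
  + by rewrite inE wD orbT.
  + by apply/orP; right; apply/existsP; exists u; rewrite inE uD orbT euw.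
Qed.

Lemma nbr_ex (T : finType) (e : rel T) : connected_graph e -> 1 < #|T| ->
  forall v, exists y, e v y.
Proof.
move=> Hc H1 v.
have : 0 < #|[set~ v]| by rewrite cardsC1; lia.
rewrite card_gt0 => /set0Pn [w]; rewrite in_setC1 => wv.
move/connectP: (Hc v w) => [p pth lst]; case: p pth lst => [|y p] /=.
- by move=> _ wv'; move: wv; rewrite wv' eqxx.
- by move=> /andP [evy _] _; exists y.
Qed.

Theorem theorem3p18 (T : finType) (e : rel T) :
  simple_graph e ->
  connected_graph e ->
  #|T| = (Delta e + 1) * (gamma e [set: T] - 1) + 1 ->
  4 <= #|T| ->
  vertex_domination_critical e ->
  regular e /\ hypo_efficient e /\ hypo_unique e.
Proof.
move=> [esym eirr] Hcon Hn H4 Hcrit.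
have [k kdef] : exists k, gamma e [set: T] - 1 = k by eexists.
rewrite kdef in Hn.
have k1 : 0 < k by move: Hn H4; case: (k) => [|//]; rewrite muln0 => ->.
have gk : gamma e [set: T] = k.+1 by lia.
have gmk : forall z, gamma e (Gminus z) = k.
  move=> z; have := Hcrit z; rewrite gk ltnS => h.
  have [D [HD cD]] := gamma_ex e (Gminus z).
  have := gamma_le (dom_add esym (or_introl (erefl z)) HD).
  rewrite gk cardsU1 cD; case: (z \notin D) => /=; lia.
have code_ex : forall z, exists D, dominating e (Gminus z) D /\ #|D| = k.
  by move=> z; have [D [HD cD]] := gamma_ex e (Gminus z); exists D; rewrite cD gmk.
have nbr := nbr_ex Hcon (leq_trans (isT : 1 < 4) H4).
have alldeg : forall v, deg e v = Delta e.
  move=> v; have [D [HD cD]] := code_ex v.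
  have [DS _ _ _] := code_props esym eirr Hn HD cD.
  have : 0 < #|D| by rewrite cD.
  rewrite card_gt0 => /set0Pn [d dD].
  have dv : v != d by move: (subsetP DS _ dD); rewrite !inE eq_sym => /andP [].
  have [C [HC cC]] := code_ex d.
  have [_ _ Cdeg _] := code_props esym eirr Hn HC cC.
  have := code_sym esym eirr Hn HD cD HC cC dv; rewrite dD => h; have vC : v \in C by rewrite -h.
  exact: Cdeg.
have uniq_code : forall v A B, dominating e (Gminus v) A -> #|A| = k ->
    dominating e (Gminus v) B -> #|B| = k -> A = B.
  move=> v A B HA cA HB cB; apply/eqP; rewrite eqEcard cA cB leqnn andbT.
  apply/subsetP => d dA; apply/negPn/negP => dB.
  have [AS _ _ _] := code_props esym eirr Hn HA cA.
  have dv : v != d by move: (subsetP AS _ dA); rewrite !inE eq_sym => /andP [].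
  have [C [HC cC]] := code_ex d.
  have := code_sym esym eirr Hn HA cA HC cC dv.
  have := code_sym esym eirr Hn HB cB HC cC dv.
  by rewrite dA (negbTE dB) => h1 h2; rewrite -h1 in h2.
split; first by move=> u v; rewrite !alldeg.
split; split.
- move=> [D /andP [_ /forall_inP HD]].
  have domD : dominating e [set: T] D.
    apply/andP; split; first exact: subsetT.
    apply/forall_inP => v vT; have := HD v vT => /eqP h.
    have : 0 < #|cnbhd e [set: T] v :&: D| by rewrite h.
    rewrite card_gt0 => /set0Pn [u]; rewrite !inE => /andP [/orP [/eqP -> | evu] uD].
    + by rewrite uD.
    + by apply/orP; right; apply/existsP; exists u; rewrite uD esym evu.
  have cD := gamma_le domD; rewrite gk in cD.
  have Hs := dcount esym (subsetT D).
  have L : \sum_(w in [set: T]) #|cnbhd e [set: T] w :&: D| = #|T|.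
    rewrite -cardsT -sum1_card; apply: eq_bigr => w wT; exact/eqP/HD.
  have R : \sum_(d in D) #|cnbhd e [set: T] d| = #|D| * (Delta e + 1).
    rewrite -sum_nat_const; apply: eq_bigr => d _; rewrite (cnbhdT_card eirr) alldeg; lia.
  have [v _] : exists v : T, true.
    have : 0 < #|[set: T]| by rewrite cardsT; lia.
    by rewrite card_gt0 => /set0Pn [v _]; exists v.
  have [y evy] := nbr v.
  have dg : 0 < deg e v by rewrite /deg card_gt0; apply/set0Pn; exists y; rewrite inE.
  rewrite alldeg in dg.
  rewrite L R in Hs; move: Hs cD dg; rewrite Hn; nia.
- move=> v; have [D [HD cD]] := code_ex v.
  have [DS _ _ Dc] := code_props esym eirr Hn HD cD.
  exists D; apply/andP; split=> //; apply/forall_inP => w wS; exact/eqP/Dc.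
- have [v _] : exists v : T, true.
    have : 0 < #|[set: T]| by rewrite cardsT; lia.
    by rewrite card_gt0 => /set0Pn [v _]; exists v.
  have [y evy] := nbr v.
  have [D [HD cD]] := code_ex v.
  have [DS Dn _ _] := code_props esym eirr Hn HD cD.
  have vD : v \notin D by apply/negP => /(subsetP DS); rewrite !inE eqxx.
  have yD : y \notin D by apply/negP => /Dn; rewrite esym evy.
  have g1 : gamma_set e [set: T] (v |: D).
    by rewrite /gamma_set (dom_add esym (or_introl (erefl v)) HD) cardsU1 vD cD gk add1n eqxx.
  have g2 : gamma_set e [set: T] (y |: D).
    by rewrite /gamma_set (dom_add esym (or_intror (etrans (esym y v) evy)) HD) cardsU1 yD cD gk add1n eqxx.
  have neq : v |: D != y |: D.
    apply/negP => /eqP h; have : v \in y |: D by rewrite -h setU11.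
    rewrite !inE (negbTE vD) orbF => /eqP vy; by move: evy; rewrite -vy eirr.
  have sub : [set v |: D; y |: D] \subset [set D0 | gamma_set e [set: T] D0].
    by apply/subsetP => X; rewrite !inE => /orP [/eqP -> | /eqP ->].
  by have := subset_leq_card sub; rewrite cards2 neq.
- move=> v; have [D0 [HD0 cD0]] := code_ex v.
  apply/eqP/cards1P; exists D0; apply/setP => D; rewrite !inE /gamma_set gmk.
  apply/idP/idP => [/andP [HD /eqP cD] | /eqP ->].
  + by rewrite (uniq_code v D D0).
  + by rewrite HD0 cD0 eqxx.
Qed.
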